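(* Let $W_0\in\mathcal{W}$ and let $W(t)$ be the solution of the assignment flow $\dot W=\Pi_W\big(S(W)\big)$ with initial value $W(0)=W_0$. Then $W(t)$ admits the representation $$W(t)=\exp_{W_0}\big(V(t)\big),$$ where $V(t)\in\mathcal{T}_0$ solves $$\dot V=\Pi_{\mathcal{T}_0}\,S\big(\exp_{W_0}(V)\big),\qquad V(0)=0 .$$
   Context: Let $G=(I,E)$ be a finite undirected graph with neighborhoods $\mathcal{N}_i=\{k\in I: ik\in E\}$, and weights $w_{ik}>0$ with $\sum_{k\in\mathcal{N}_i}w_{ik}=1$ for all $i\in I$. Let $J$ be a finite label set. All operations on vectors (products, quotients, $\log$, $e^{(\cdot)}$) are componentwise. Simplex and tangent space: $\mathcal{S}=\{p\in\mathbb{R}^{|J|}: p_j>0,\ \langle\mathbb{1},p\rangle=1\}$ and $T_0=\{v\in\mathbb{R}^{|J|}:\langle\mathbb{1},v\rangle=0\}$. Write $\mathbb{1}_{\mathcal{S}}=\frac{1}{|J|}\mathbb{1}$. Define $\Pi_{T_0}(z)=z-\langle\mathbb{1}_{\mathcal{S}},z\rangle\mathbb{1}$, and for $p\in\mathcal{S}$, $\Pi_p(z)=(\mathrm{Diag}(p)-pp^\top)z$. Define $\exp_p:\mathbb{R}^{|J|}\to\mathcal{S}$, $\exp_p(z)=\frac{p\,e^{z}}{\langle p,e^{z}\rangle}$. Assignment manifold $\mathcal{W}=\mathcal{S}^{|I|}$ with points $W=(W_i)_{i\in I}$, $W_i\in\mathcal{S}$; $\mathcal{T}_0=T_0^{|I|}$.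 The maps $\Pi_{\mathcal{T}_0}$, $\Pi_W$, $\exp_W$ act blockwise: $(\Pi_{\mathcal{T}_0}Z)_i=\Pi_{T_0}Z_i$, $(\Pi_W Z)_i=\Pi_{W_i}Z_i$, $(\exp_W Z)_i=\exp_{W_i}(Z_i)$ for $Z=(Z_i)_{i\in I}\in\mathbb{R}^{|I||J|}$. Given distance vectors $D_i\in\mathbb{R}^{|J|}$ ($i\in I$) and $\rho>0$, the likelihood vectors are $L_i(W_i)=\frac{W_i e^{-D_i/\rho}}{\langle W_i,e^{-D_i/\rho}\rangle}$. For $W\in\mathcal{W}$ the geometric mean is $\mathcal{G}^w_i(W)=\exp_{W_i}\Big(\log\frac{\prod_{k\in\mathcal{N}_i}W_k^{w_{ik}}}{W_i}\Big)$, and the similarity vectors are $S_i(W)=\mathcal{G}^w_i\big(L(W)\big)$ with $L(W)=(L_i(W_i))_{i\in I}$; $S(W)=(S_i(W))_{i\in I}\in\mathcal{W}$. *)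

(* Defs.v *)
From HB Require Import structures.
From mathcomp Require Import all_boot all_order all_algebra.
From mathcomp Require Import all_classical all_reals all_analysis.
Set Implicit Arguments. Unset Strict Implicit. Unset Printing Implicit Defensive.
Import Order.TTheory GRing.Theory Num.Theory.
Local Open Scope ring_scope.

Section AssignmentFlow.
Variables (R : realType) (I J : finType).

Definition vecJ := J -> R.
Definition matIJ := I -> J -> R.

Definition in_simplex (p : vecJ) : Prop :=
  (forall j, 0 < p j) /\ \sum_(j : J) p j = 1.

Definition in_T0 (v : vecJ) : Prop := \sum_(j : J) v j = 0.

Definition in_assign (W : matIJ) : Prop := forall i, in_simplex (W i).
Definition in_calT0 (V : matIJ) : Prop := forall i, in_T0 (V i).

(* Pi_{T0} z = z - <1_S, z> 1 with 1_S = 1/|J| *)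
Definition PiT0 (z : vecJ) : vecJ :=
  fun j => z j - (\sum_(k : J) (#|J|%:R)^-1 * z k).

(* Pi_p z = (Diag(p) - p p^T) z *)
Definition Pip (p z : vecJ) : vecJ :=
  fun j => p j * z j - p j * (\sum_(k : J) p k * z k).

Definition expS (p z : vecJ) : vecJ :=
  fun j => p j * expR (z j) / (\sum_(k : J) p k * expR (z k)).

Definition PicalT0 (Z : matIJ) : matIJ := fun i => PiT0 (Z i).
Definition PiW (W Z : matIJ) : matIJ := fun i => Pip (W i) (Z i).
Definition expW (W Z : matIJ) : matIJ := fun i => expS (W i) (Z i).

Definition likelihood (D : matIJ) (rho : R) (W : matIJ) : matIJ :=
  fun i j => W i j * expR (- D i j / rho) /
             (\sum_(k : J) W i k * expR (- D i k / rho)).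

Definition geomean (E : rel I) (w : I -> I -> R) (W : matIJ) : matIJ :=
  fun i => expS (W i)
    (fun j => ln ((\prod_(k | E i k) (W k j) `^ (w i k)) / W i j)).

Definition similarity (E : rel I) (w : I -> I -> R) (D : matIJ) (rho : R)
  (W : matIJ) : matIJ := geomean E w (likelihood D rho W).

End AssignmentFlow.

(* Main.v *)
Require Import Defs.
From HB Require Import structures.
From mathcomp Require Import all_boot all_order all_algebra.
From mathcomp Require Import all_classical all_reals all_analysis.
Import Order.TTheory GRing.Theory Num.Theory.
Local Open Scope ring_scope.

Lemma deriv_sum (R : realType) (T : Type) (r : seq T) (P : pred T) (f : T -> R -> R) (df : T -> R) (t : R) :
  (forall k, is_derive t (1:R) (f k) (df k)) ->
  is_derive t (1:R) (fun s => \sum_(k <- r | P k) f k s) (\sum_(k <- r | P k) df k).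
Proof.
move=> H; elim: r => [|a r IH].
  under eq_fun do rewrite big_nil. rewrite big_nil; exact: is_derive_cst.
under eq_fun do rewrite big_cons. rewrite big_cons.
case: (P a) => //. exact: is_deriveD.
Qed.

Lemma deriv_ln (R : realType) (g : R -> R) t dg :
  0 < g t -> is_derive t 1 g dg -> is_derive t 1 (fun s => ln (g s)) ((g t)^-1 * dg).
Proof.
move=> gp H. have := @is_derive1_comp R (@ln R) g t _ _ (is_derive1_ln gp) H. by [].
Qed.

Lemma deriv_B (R : realType) (f g : R -> R) t a b :
  is_derive t (1:R) f a -> is_derive t (1:R) g b -> is_derive t (1:R) (fun s => f s - g s) (a - b).
Proof. move=> ha hb; exact: is_deriveB. Qed.

Lemma deriv_M (R : realType) (f : R -> R) (c : R) t a :
  is_derive t (1:R) f a -> is_derive t (1:R) (fun s => c * f s) (c * a).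
Proof. move=> ha; exact: is_deriveZ. Qed.

Lemma deriv_C (R : realType) (c : R) t :
  is_derive t (1:R) (fun s : R => c) 0.
Proof. exact: is_derive_cst. Qed.

Arguments deriv_sum {R T} r P {f df t}.
Arguments deriv_ln {R g t dg}.
Arguments deriv_B {R f g t a b}.
Arguments deriv_M {R f} c {t a}.
Arguments deriv_C {R} c t.

Theorem proposition3p1 (R : realType) (I J : finType)
  (E : rel I) (w : I -> I -> R) (D : matIJ R I J) (rho : R)
  (W0 : matIJ R I J) (W : R -> matIJ R I J) :
  (* G = (I, E) finite undirected graph *)
  (forall i k, E i k = E k i) ->
  (* positive weights on neighbourhoods, summing to one *)
  (forall i k, E i k -> 0 < w i k) ->
  (forall i, \sum_(k | E i k) w i k = 1) ->
  0 < rho ->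
  in_assign W0 ->
  (* W(t) is the solution of the assignment flow with W(0) = W0 *)
  (forall t : R, in_assign (W t)) ->
  W 0 = W0 ->
  (forall (t : R) i j, is_derive t (1 : R) (fun s => W s i j)
                   (PiW (W t) (similarity E w D rho (W t)) i j)) ->
  exists V : R -> matIJ R I J,
    (forall t : R, in_calT0 (V t)) /\
    V 0 = (fun _ _ => 0) /\
    (forall (t : R) i j, is_derive t (1 : R) (fun s => V s i j)
       (PicalT0 (similarity E w D rho (expW W0 (V t))) i j)) /\
    (forall t : R, W t = expW W0 (V t)).
Proof.
move=> _ _ _ _ hW0 hW W00 hder.
pose Z (t : R) (i : I) := fun j => ln (W t i j) - ln (W0 i j).
pose V (t : R) : matIJ R I J := fun i => PiT0 (Z t i).
have Wp t i j : 0 < W t i j by case: (hW t i) => h _; exact: h.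
have W0p i j : 0 < W0 i j by case: (hW0 i) => h _; exact: h.
have Ws t i : \sum_j W t i j = 1 by case: (hW t i).
have Hrep t : W t = expW W0 (V t).
  apply/funext => i; apply/funext => j.
  rewrite /expW /expS /V /PiT0.
  set C := \sum_(k : J) _.
  have e k : W0 i k * expR (Z t i k - C) = W t i k / expR C.
    rewrite expRB /Z expRB !lnK ?posrE //.
    by rewrite mulrA mulrCA divff ?mulr1 // gt_eqF.
  under eq_bigr do rewrite e.
  by rewrite e -mulr_suml Ws mul1r invrK divfK // gt_eqF // expR_gt0.
exists V; split.
  move=> t i; rewrite /in_T0 /V /PiT0 sumrB sumr_const.
  case: (#|J| =P 0%N) => [h0|hn].
    rewrite h0 mulr0n subr0 big_pred0 // => k.
    by have := card0_eq h0 k.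
  rewrite -mulr_sumr -[X in _ - X]mulr_natr mulrAC mulVf ?mul1r ?subrr //.
  by rewrite pnatr_eq0; apply/eqP.
split.
  apply/funext => i; apply/funext => j.
  rewrite /V /PiT0 /Z W00 subrr big1 ?subrr // => k _.
  by rewrite subrr mulr0.
split; last exact: Hrep.
move=> t i j; rewrite -Hrep.
set S := similarity E w D rho (W t).
set c := (#|J|%:R)^-1 : R.
have hZ k : is_derive t (1:R) (fun s => Z s i k) ((W t i k)^-1 * PiW (W t) S i k - 0).
  apply: (@deriv_B R (fun s => ln (W s i k)) (fun _ => ln (W0 i k))).
  exact: (deriv_ln (Wp t i k) (hder t i k)).
have := deriv_B (hZ j) (deriv_sum (index_enum J) predT (fun k => deriv_M c (hZ k))).
rewrite /V /PiT0 /=.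
set d := (_ - _) => hd.
suff -> : PicalT0 S i j = d by exact: hd.
rewrite /d /PicalT0 /PiT0 /PiW /Pip.
have dk k : (W t i k)^-1 * (W t i k * S i k - W t i k * (\sum_(k0 : J) W t i k0 * S i k0)) - 0
   = S i k - \sum_(k0 : J) W t i k0 * S i k0.
  by rewrite -mulrBr mulKf ?subr0 // gt_eqF.
rewrite dk.
under [X in _ = _ - X]eq_bigr do rewrite dk.
set a := \sum_(k0 : J) W t i k0 * S i k0.
have hc : c * #|J|%:R = 1.
  rewrite mulVf // pnatr_eq0 -lt0n; apply/card_gt0P; by exists j.
rewrite [X in _ = _ - X](eq_bigr (fun k => c * S i k - c * a)); last by move=> k _; rewrite mulrBr.
rewrite [X in _ = _ - X]sumrB sumr_const.
have hca : (c * a) *+ #|J| = a by rewrite -mulrnAl -mulr_natr hc mul1r.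
rewrite hca /c /a.
by rewrite opprB addrA subrK.
Qed.
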